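(* Let $n\ge2$. If $K$ is a bounded measurable set in $\mathbb{R}^n$, then $V(K^{\diamond\diamond})\ge V(K)$. If in addition $K$ is a star body, equality holds if and only if $K=K^{\diamond\diamond}$.
   Context: For $x,y\in\mathbb{R}^n$ let $[x,y]=\sqrt{|x|^2|y|^2-(x\cdot y)^2}$. The sine polar body of $K\subset\mathbb{R}^n$ is $K^{\diamond}=\{x\in\mathbb{R}^n:[x,y]\le1\text{ for all }y\in K\}$, and $K^{\diamond\diamond}=(K^{\diamond})^{\diamond}$. $V$ is volume. A star body is a set $\{ru:u\in S^{n-1},0\le r\le\rho(u)\}$ with $\rho:S^{n-1}\to(0,\infty)$ continuous. *)

(* Defs.v *)
(* R^n is modelled as row vectors 'rV[R]_n over R : realType. *)
From HB Require Import structures.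
From mathcomp Require Import all_boot all_order all_algebra.
From mathcomp Require Import all_classical all_reals all_analysis.
Set Implicit Arguments. Unset Strict Implicit. Unset Printing Implicit Defensive.
Import Order.TTheory GRing.Theory Num.Theory.
Import numFieldNormedType.Exports.
Local Open Scope classical_set_scope.
Local Open Scope ring_scope.

Section Defs.
Context {R : realType} {n : nat}.

Definition dotv (x y : 'rV[R]_n) : R := \sum_(i < n) x 0 i * y 0 i.
Definition sqnorm (x : 'rV[R]_n) : R := dotv x x.

Definition sinbr (x y : 'rV[R]_n) : R :=
  Num.sqrt (sqnorm x * sqnorm y - (dotv x y) ^+ 2).

Definition sine_polar (K : set 'rV[R]_n) : set 'rV[R]_n :=
  [set x | forall y, K y -> sinbr x y <= 1].

Definition box (a b : 'rV[R]_n) : set 'rV[R]_n :=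
  [set x | forall i, a 0 i <= x 0 i <= b 0 i].
Definition boxvol (a b : 'rV[R]_n) : R := \prod_(i < n) Num.max (b 0 i - a 0 i) 0.

(* n-dimensional Lebesgue (outer) measure: infimum of total volumes of
   countable covers by boxes.  On Lebesgue measurable sets this is the volume V. *)
Definition volume (A : set 'rV[R]_n) : \bar R :=
  ereal_inf [set s | exists a b : nat -> 'rV[R]_n,
     A `<=` \bigcup_k box (a k) (b k) /\
     s = (\sum_(0 <= k <oo) (boxvol (a k) (b k))%:E)%E].

Definition lebesgue_measurable (A : set 'rV[R]_n) : Prop :=
  volume.-caratheodory A.

Definition bounded_euclid (A : set 'rV[R]_n) : Prop :=
  exists M : R, forall x, A x -> sqnorm x <= M.

Definition unit_sphere : set 'rV[R]_n := [set u | sqnorm u = 1].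

Definition star_body (K : set 'rV[R]_n) : Prop :=
  exists rho : 'rV[R]_n -> R,
    (forall u, unit_sphere u -> 0 < rho u) /\
    {within unit_sphere, continuous rho} /\
    K = [set x | exists r u, unit_sphere u /\ 0 <= r <= rho u /\ x = r *: u].

End Defs.

(* Main.v *)
Require Import Defs.
From HB Require Import structures.
From mathcomp Require Import all_boot all_order all_algebra.
From mathcomp Require Import all_classical all_reals all_analysis.
From mathcomp Require Import measurable_realfun lebesgue_integral.
From mathcomp Require Import ring lra.
Set Implicit Arguments. Unset Strict Implicit. Unset Printing Implicit Defensive.
Import Order.TTheory GRing.Theory Num.Theory.
Import numFieldNormedType.Exports.
Local Open Scope classical_set_scope.
Local Open Scope ring_scope.

Section S.

Variable R : realType.
Local Notation leb := (@lebesgue_measure R).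

Lemma one_dim (a b c : nat -> R) (al be : R) : (forall k, 0 <= c k) -> al <= be ->
 (forall t, al <= t <= be -> (1 <= \sum_(k <oo) (c k * (\1_(`[a k, b k]%classic) t))%:E)%E) ->
 ((be - al)%:E <= \sum_(k <oo) (c k * Num.max (b k - a k) 0)%:E)%E.
Proof.
move=> c0 ab H.
have mD : measurable (`[al, be]%classic : set R) by [].
have mf : forall k, measurable_fun (`[al, be]%classic : set R) (fun t : R => ((c k * (\1_(`[a k, b k]%classic) t))%:E : \bar R)).
  move=> k; apply/measurable_EFinP; apply: measurable_funM => //.
have f0 : forall k (t : R), (`[al, be]%classic : set R) t -> (0 <= (c k * (\1_(`[a k, b k]%classic) t))%:E)%E.
  by move=> k t _; rewrite lee_fin mulr_ge0.
have E1 : ((be - al)%:E = \int[leb]_(x in `[al, be]%classic) (cst 1) x)%E.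
  rewrite integral_cst // mul1e. have := lebesgue_measure_itv `[al, be]. rewrite /= lte_fin. case: ltgtP ab => //. move=> -> _ ->; by rewrite subrr.
rewrite E1.
apply: (@le_trans _ _ (\int[leb]_(x in `[al, be]%classic) (\sum_(k <oo) (c k * (\1_(`[a k, b k]%classic) x))%:E))%E).
  apply: ge0_le_integral => //.
  - exact: (@ge0_emeasurable_sum _ _ _ _ (fun k x => (c k * \1_(`[a k, b k]%classic) x)%:E) xpredT (fun k x Hx _ => f0 k x Hx) (fun k _ => mf k)).
rewrite integral_nneseries //.
apply: lee_nneseries => k _.
  by move=> _; apply: integral_ge0 => x Hx; apply: f0.
have E := @integralZl_indic _ _ _ leb `[al,be]%classic (ltac:(by [])) (fun _ => `[a k,b k]%classic) (c k). rewrite /= in E. rewrite E //; last by move=> ck; have := c0 k; rewrite leNgt ck.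
rewrite integral_indic // EFinM; apply: lee_wpmul2l; first by rewrite lee_fin.
apply: le_trans; first by apply: measureIl.
have := lebesgue_measure_itv `[a k, b k]; rewrite /= lte_fin => ->.
case: ltP => h; first by rewrite -EFinB lee_fin le_max lexx.
by rewrite lee_fin le_max lexx orbT.
Qed.

Variable n : nat.
Definition ind (m : nat) (a b : 'rV[R]_n) (x : 'rV[R]_n) : R :=
  \prod_(i < n | (i < m)%N) \1_(`[a 0 i, b 0 i]%classic) (x 0 i).
Definition vol (m : nat) (a b : 'rV[R]_n) : R :=
  \prod_(i < n | (i < m)%N) Num.max (b 0 i - a 0 i) 0.

Lemma indic_itv (a b x : R) : \1_(`[a,b]%classic) x = if (a <= x <= b) then 1 else 0 :> R.
Proof.
rewrite indicE; case: ifP => h.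
  by rewrite mem_set //= in_itv /= h.
by rewrite memNset //= in_itv /= h.
Qed.
Lemma indic_itv_ge0 (a b x : R) : 0 <= \1_(`[a,b]%classic) x :> R.
Proof. by rewrite indic_itv; case: ifP. Qed.
Lemma ind_ge0 m a b x : 0 <= ind m a b x.
Proof. by apply: prodr_ge0 => i _; apply: indic_itv_ge0. Qed.
Lemma vol_ge0 m a b : 0 <= vol m a b.
Proof. by apply: prodr_ge0 => i _; rewrite le_max lexx orbT. Qed.

Lemma vol0 a b : vol 0%N a b = 1.
Proof. by rewrite /vol big1 // => i; rewrite ltn0. Qed.
Lemma ind0 a b x : ind 0%N a b x = 1.
Proof. by rewrite /ind big1 // => i; rewrite ltn0. Qed.

Lemma prodS (F : 'I_n -> R) m (mn : (m < n)%N) :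
  \prod_(i < n | (i < m.+1)%N) F i = F (Ordinal mn) * \prod_(i < n | (i < m)%N) F i.
Proof.
rewrite (bigD1 (Ordinal mn)) //=; congr (_ * _); apply: eq_bigl => i.
by rewrite ltnS [(i < m)%N]ltn_neqAle -val_eqE /= andbC.
Qed.

Lemma multi_dim m : (m <= n)%N -> forall (w : nat -> R) (a b : nat -> 'rV[R]_n) (al be : 'rV[R]_n),
  (forall k, 0 <= w k) -> (forall i, al 0 i <= be 0 i) ->
  (forall x : 'rV[R]_n, (forall i : 'I_n, (i < m)%N -> al 0 i <= x 0 i <= be 0 i) ->
      (1 <= \sum_(k <oo) (w k * ind m (a k) (b k) x)%:E)%E) ->
  ((vol m al be)%:E <= \sum_(k <oo) (w k * vol m (a k) (b k))%:E)%E.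
Proof.
elim: m => [|m IH] mn w a b al be w0 ab H.
  have := H al (fun i => ltac:(by [])).
  under eq_eseriesr do rewrite ind0 mulr1.
  move=> h; rewrite vol0; apply: le_trans h _.
  by rewrite le_eqVlt; apply/orP; left; apply/eqP; apply: eq_eseriesr => k _; rewrite vol0 mulr1.
have mn' : (m < n)%N by [].
set i0 := Ordinal mn'.
have volS : forall a b, vol m.+1 a b = Num.max (b 0 i0 - a 0 i0) 0 * vol m a b.
  by move=> a' b'; rewrite /vol prodS.
have indS : forall a b x, ind m.+1 a b x = \1_(`[a 0 i0, b 0 i0]%classic) (x 0 i0) * ind m a b x.
  by move=> a' b' x; rewrite /ind prodS.
have V0 : 0 <= vol m al be by apply: vol_ge0.
rewrite le_eqVlt in V0; case/orP: V0 => [/eqP V0|V0].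
  rewrite volS -V0 mulr0.
  by apply: nneseries_ge0 => k _ _; rewrite lee_fin mulr_ge0 // vol_ge0.
set V := vol m al be in V0 *.
have key : forall t, al 0 i0 <= t <= be 0 i0 ->
    (V%:E <= \sum_(k <oo) (w k * \1_(`[a k 0 i0, b k 0 i0]%classic) t * vol m (a k) (b k))%:E)%E.
  move=> t ht.
  apply: (IH (ltnW mn) (fun k => w k * \1_(`[a k 0 i0, b k 0 i0]%classic) t)) => //.
    by move=> k; rewrite mulr_ge0 // indic_itv_ge0.
  move=> x hx'.
  pose x' : 'rV[R]_n := \row_j (if j == i0 then t else x 0 j).
  have x'0 : x' 0 i0 = t by rewrite mxE eqxx.
  have x'i : forall i : 'I_n, (i < m)%N -> x' 0 i = x 0 i.
    move=> i im; rewrite mxE; case: eqP => // ei.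
    by move: im; rewrite ei /= ltnn.
  have hx'' : forall i : 'I_n, (i < m.+1)%N -> al 0 i <= x' 0 i <= be 0 i.
    move=> i; rewrite ltnS leq_eqVlt => /orP [/eqP ei|im].
      have -> : i = i0 by apply: val_inj.
      by rewrite x'0.
    by rewrite x'i //; apply: hx'.
  apply: (le_trans (H x' hx'')).
  rewrite le_eqVlt; apply/orP; left; apply/eqP; apply: eq_eseriesr => k _.
  rewrite indS x'0 mulrA; congr ((_ * _ * _)%:E).
  by apply: eq_bigr => i im; rewrite x'i.
have Vi0 : 0 < V^-1 by rewrite invr_gt0.
have h1 := @one_dim (fun k => a k 0 i0) (fun k => b k 0 i0) (fun k => w k * vol m (a k) (b k) / V) (al 0 i0) (be 0 i0).
have V0' : V != 0 by rewrite gt_eqF.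
have c0 : forall k, 0 <= w k * vol m (a k) (b k) / V.
  by move=> k; rewrite !mulr_ge0 // ?vol_ge0 // ltW.
have hyp : forall t, al 0 i0 <= t <= be 0 i0 -> (1 <= \sum_(k <oo)
        (w k * vol m (a k) (b k) / V * \1_(`[a k 0 i0, b k 0 i0]%classic) t)%:E)%E.
  move=> t ht.
  have -> : (\sum_(k <oo) (w k * vol m (a k) (b k) / V * \1_(`[a k 0 i0, b k 0 i0]%classic) t)%:E
     = (V^-1)%:E * \sum_(k <oo) (w k * \1_(`[a k 0 i0, b k 0 i0]%classic) t * vol m (a k) (b k))%:E)%E.
    rewrite -nneseriesZl; last by move=> k _; rewrite lee_fin !mulr_ge0 // ?indic_itv_ge0 ?vol_ge0.
    by apply: eq_eseriesr => k _; rewrite -EFinM; congr EFin; ring.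
  rewrite -(mulVf V0') EFinM; apply: lee_wpmul2l; first by rewrite lee_fin ltW.
  exact: key.
have h2 := h1 c0 (ab i0) hyp.
rewrite volS.
have -> : Num.max (be 0 i0 - al 0 i0) 0 = be 0 i0 - al 0 i0 by apply/max_idPl; rewrite subr_ge0.
have -> : (\sum_(k <oo) (w k * vol m.+1 (a k) (b k))%:E = V%:E * \sum_(k <oo)
       (w k * vol m (a k) (b k) / V * Num.max (b k 0 i0 - a k 0 i0) 0)%:E)%E.
  rewrite -nneseriesZl; last by move=> k _; rewrite lee_fin mulr_ge0 // le_max lexx orbT.
  apply: eq_eseriesr => k _; rewrite volS -EFinM; congr EFin; by field.
rewrite EFinM muleC; apply: lee_wpmul2l; first by rewrite lee_fin ltW.
exact: h2.
Qed.

Lemma boxvol_ge0 (a b : 'rV[R]_n) : 0 <= boxvol a b.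
Proof. by apply: prodr_ge0 => i _; rewrite le_max lexx orbT. Qed.

Lemma volume_ge0 (A : set 'rV[R]_n) : (0 <= volume A)%E.
Proof.
apply: le_ereal_inf_tmp => s [a [b [_ ->]]].
by apply: nneseries_ge0 => k _ _; rewrite lee_fin boxvol_ge0.
Qed.

Lemma volume_mono (A B : set 'rV[R]_n) : A `<=` B -> (volume A <= volume B)%E.
Proof.
move=> AB; apply: ereal_inf_le_tmp => s [a [b [cov ->]]].
by exists a, b; split => //; apply: subset_trans cov.
Qed.

Lemma box_pos (al be : 'rV[R]_n) : (forall i, al 0 i < be 0 i) ->
  ((boxvol al be)%:E <= volume (box al be))%E.
Proof.
move=> ab; apply: le_ereal_inf_tmp => s [a [b [cov ->]]].
have -> : boxvol al be = vol n al be by apply: eq_bigl => i; rewrite ltn_ord.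
have -> : (\sum_(0 <= k <oo) (boxvol (a k) (b k))%:E = \sum_(k <oo) (1 * vol n (a k) (b k))%:E)%E.
  by apply: eq_eseriesr => k _; rewrite mul1r; congr EFin; apply: eq_bigl => i; rewrite ltn_ord.
apply: multi_dim => //.
- by move=> i; apply: ltW.
- move=> x hx.
  have bx : box al be x by move=> i; apply: hx.
  case: (cov x bx) => k0 _ hk0.
  apply: le_trans; last first.
    apply: (@nneseries_lim_ge _ _ xpredT 0%N k0.+1).
    by move=> k _ _; rewrite lee_fin mulr_ge0 // ind_ge0.
  rewrite big_nat_recr //=.
  have -> : ind n (a k0) (b k0) x = 1.
    by apply: big1 => i _; rewrite indic_itv hk0.
  rewrite mul1r -[X in (X <= _)%E]add0e; apply: leeD => //.
  by apply: sume_ge0 => k _; rewrite lee_fin mulr_ge0 // ind_ge0.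
Qed.

Lemma volume_box_fin (n0 : (0 < n)%N) (al be : 'rV[R]_n) :
  (volume (box al be) <= (boxvol al be)%:E)%E.
Proof.
apply: ge_ereal_inf.
exists (boxvol al be)%:E => //.
exists (fun k => if k == 0%N then al else al), (fun k => if k == 0%N then be else al).
split; first by move=> x bx; exists 0%N => //=.
rewrite (nneseries_split 0%N 1%N); last by move=> k _; rewrite lee_fin boxvol_ge0.
rewrite eseries0; last first.
  move=> k; rewrite add0n; case: k => // k _ _ /=.
  rewrite /boxvol (bigD1 (Ordinal n0)) //= subrr maxxx mul0r //.
by rewrite add0n big_nat1 /= adde0.
Qed.

Implicit Types x y z : 'rV[R]_n.


Lemma dotvC x y : dotv x y = dotv y x.
Proof. by apply: eq_bigr => i _; rewrite mulrC. Qed.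
Lemma dotvDl x y z : dotv (x + y) z = dotv x z + dotv y z.
Proof. by rewrite /dotv -big_split; apply: eq_bigr => i _; rewrite mxE mulrDl. Qed.
Lemma dotvZl c x y : dotv (c *: x) y = c * dotv x y.
Proof. by rewrite /dotv mulr_sumr; apply: eq_bigr => i _; rewrite mxE mulrA. Qed.
Lemma dotvDr x y z : dotv z (x + y) = dotv z x + dotv z y.
Proof. by rewrite dotvC dotvDl !(dotvC z). Qed.
Lemma dotvZr c x y : dotv y (c *: x) = c * dotv y x.
Proof. by rewrite dotvC dotvZl dotvC. Qed.
Lemma sqnorm_ge0 x : 0 <= sqnorm x.
Proof. by apply: sumr_ge0 => i _; rewrite -expr2 sqr_ge0. Qed.
Lemma sqnormZ c x : sqnorm (c *: x) = c ^+ 2 * sqnorm x.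
Proof. by rewrite /sqnorm dotvZl dotvZr mulrA expr2. Qed.
Lemma sqnormD x y : sqnorm (x + y) = sqnorm x + 2 * dotv x y + sqnorm y.
Proof. rewrite /sqnorm dotvDl !dotvDr (dotvC y x); ring. Qed.
Lemma sqnorm_eq0 x : sqnorm x = 0 -> x = 0.
Proof.
move=> /eqP; rewrite psumr_eq0; last by move=> i _; rewrite -expr2 sqr_ge0.
move=> /allP h; apply/rowP => i; rewrite mxE.
have /h : i \in index_enum 'I_n by rewrite mem_index_enum.
by rewrite /= mulf_eq0 orbb => /eqP.
Qed.
Lemma coord_sq_le x i : x 0 i ^+ 2 <= sqnorm x.
Proof.
rewrite /sqnorm /dotv (bigD1 i) //= -expr2 lerDl.
by apply: sumr_ge0 => j _; rewrite -expr2 sqr_ge0.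
Qed.
Lemma two_sq_le x (i j : 'I_n) : i != j -> x 0 i ^+ 2 + x 0 j ^+ 2 <= sqnorm x.
Proof.
move=> ij; rewrite /sqnorm /dotv (bigD1 i) //= (bigD1 j) 1?eq_sym //= -!expr2 addrA lerDl.
by apply: sumr_ge0 => k _; rewrite -expr2 sqr_ge0.
Qed.

Lemma abs_le_sq (a : R) : `|a| <= 1 + a ^+ 2.
Proof. rewrite -real_normK ?num_real //; have := normr_ge0 a; nra. Qed.
Lemma coord_abs_le x i : `|x 0 i| <= 1 + sqnorm x.
Proof. by apply: le_trans (abs_le_sq _) _; rewrite lerD2l coord_sq_le. Qed.
Lemma dot_bound x y (A B : R) : (forall i, `|x 0 i| <= A) -> (forall i, `|y 0 i| <= B) ->
  `|dotv x y| <= n%:R * (A * B).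
Proof.
move=> hA hB; rewrite /dotv; apply: le_trans (ler_norm_sum _ _ _) _.
apply: le_trans (_ : _ <= \sum_(i < n) (A * B)) _.
  by apply: ler_sum => i _; rewrite normrM ler_pM.
by rewrite big_const_ord iter_addr_0 mulr_natl.
Qed.
Lemma dot_e x (j : 'I_n) : dotv x (delta_mx 0 j) = x 0 j.
Proof.
rewrite /dotv (bigD1 j) //= mxE !eqxx mulr1 big1 ?addr0 // => i ij.
by rewrite mxE (negbTE ij) /= mulr0.
Qed.
Lemma sqnorm_e (j : 'I_n) : sqnorm (delta_mx 0 j : 'rV[R]_n) = 1.
Proof. by rewrite /sqnorm dot_e mxE !eqxx. Qed.
Definition Q x y := sqnorm x * sqnorm y - dotv x y ^+ 2.
Lemma sinbr_le1 x y : (sinbr x y <= 1) = (Q x y <= 1).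
Proof. by rewrite /sinbr -{1}sqrtr1 ler_sqrt. Qed.
Lemma sinbrC x y : sinbr x y = sinbr y x.
Proof. by rewrite /sinbr dotvC mulrC. Qed.
Lemma QZl c x y : Q (c *: x) y = c ^+ 2 * Q x y.
Proof. rewrite /Q sqnormZ dotvZl; ring. Qed.
Lemma QZr c x y : Q y (c *: x) = c ^+ 2 * Q y x.
Proof. rewrite /Q sqnormZ dotvZr; ring. Qed.

Lemma sqnorm_cvg x1 : (fun x : 'rV[R]_n => sqnorm x) @ x1 --> sqnorm x1.
Proof.
rewrite /sqnorm /dotv.
apply: (@cvg_big _ _ _ _ _ add_continuous _ (nbhs x1)).
move=> i _; apply: (@cvgM _ _ (nbhs x1)); exact: coord_continuous.
Qed.

Lemma N_cvg x1 : (fun x : 'rV[R]_n => Num.sqrt (sqnorm x)) @ x1 --> Num.sqrt (sqnorm x1).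
Proof.
have H := (@continuous_cvg _ _ _ (nbhs x1) (nbhs_filter x1) (fun x => sqnorm x) Num.sqrt (sqnorm x1) (@sqrt_continuous R _) (@sqnorm_cvg x1)).
exact H.
Qed.

Lemma g_cvg x1 : sqnorm x1 != 0 ->
  (fun x : 'rV[R]_n => (Num.sqrt (sqnorm x))^-1 *: x) @ x1 --> (Num.sqrt (sqnorm x1))^-1 *: x1.
Proof.
move=> h.
have h' : Num.sqrt (sqnorm x1) != 0.
  by rewrite sqrtr_eq0 -ltNge lt_def h sqnorm_ge0.
have hV := cvgV h' (@N_cvg x1).
have hV' := hV (nbhs_filter x1).
have := cvgZ hV' (@cvg_id _ (nbhs x1)).
by move=> /(_ (nbhs_filter x1)).
Qed.

Lemma notK_near (rho : 'rV[R]_n -> R) (u : 'rV[R]_n) (t : R) :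
  {within unit_sphere, continuous rho} -> unit_sphere u -> rho u < t -> 0 <= rho u ->
  \forall x \near t *: u, ~ (exists r v, unit_sphere v /\ 0 <= r <= rho v /\ x = r *: v).
Proof.
move=> hc hu ru r0.
have hu' : sqnorm u = 1 := hu.
have t0 : 0 < t by apply: le_lt_trans ru.
set x1 := t *: u.
have sq1 : sqnorm x1 = t ^+ 2 by rewrite sqnormZ hu' mulr1.
have Nx1 : Num.sqrt (sqnorm x1) = t by rewrite sq1 sqrtr_sqr gtr0_norm.
have x1n0 : sqnorm x1 != 0 by rewrite sq1 expf_neq0 // gt_eqF.
have gx1 : (Num.sqrt (sqnorm x1))^-1 *: x1 = u by rewrite Nx1 scalerA mulVf ?scale1r // gt_eqF.
set eps := (t - rho u) / 2.
have eps0 : 0 < eps by rewrite divr_gt0 // subr_gt0.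
have hN := @N_cvg x1; rewrite Nx1 in hN.
have hg := @g_cvg x1 x1n0; rewrite gx1 in hg.
have hr : rho @ within unit_sphere (nbhs u) --> rho u := (subspace_continuousP _ _).1 hc u hu.
have Hr := (cvgrPdist_lt _ _).1 hr eps eps0.
have Hr' : \forall v \near u, unit_sphere v -> `|rho u - rho v| < eps := Hr (within_filter _ (nbhs_filter u)).
have Hg : \forall x \near x1, (unit_sphere ((Num.sqrt (sqnorm x))^-1 *: x) ->
    `|rho u - rho ((Num.sqrt (sqnorm x))^-1 *: x)| < eps) := hg _ Hr'.
have HN : \forall x \near x1, `|t - Num.sqrt (sqnorm x)| < eps := (cvgrPdist_lt _ _).1 hN eps eps0.
near=> x.
have hNx : `|t - Num.sqrt (sqnorm x)| < eps by near: x; exact: HN.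
have hgx : (unit_sphere ((Num.sqrt (sqnorm x))^-1 *: x) ->
    `|rho u - rho ((Num.sqrt (sqnorm x))^-1 *: x)| < eps) by near: x; exact: Hg.
move=> [r [v [hv [/andP [r0' rv] ex]]]].
have hv' : sqnorm v = 1 := hv.
have Nx : Num.sqrt (sqnorm x) = r by rewrite ex sqnormZ hv' mulr1 sqrtr_sqr ger0_norm.
rewrite Nx in hNx hgx.
have e2 : eps * 2 = t - rho u by rewrite /eps mulfVK // pnatr_eq0.
have h1 : t - r < eps := le_lt_trans (ler_norm _) hNx.
have rpos : 0 < r by lra.
have gv : r^-1 *: x = v by rewrite ex scalerA mulVf ?scale1r // gt_eqF.
rewrite gv in hgx.
have h2 : rho v - rho u < eps by rewrite distrC in hgx; apply: le_lt_trans (ler_norm _) (hgx hv).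
lra.
Unshelve. all: by end_near.
Qed.

Lemma near_box (x1 : 'rV[R]_n) (P : 'rV[R]_n -> Prop) : (\forall x \near x1, P x) ->
  exists2 e, 0 < e & forall y, (forall i, `|x1 0 i - y 0 i| < e) -> P y.
Proof.
move=> /nbhs_ballP [e e0 he]; exists e => // y hy; apply: he.
split => // i j; rewrite (ord1 i).
exact: hy.
Qed.

Lemma core (lam A M2 P S B D nn X Z del C Q1 : R) :
  0 <= A -> A <= M2 -> 0 <= nn -> 0 <= X -> 0 <= Z -> 0 <= del -> del <= 1 ->
  `|P| <= nn * (X * del) -> `|S| <= nn * (del * del) -> `|B| <= nn * (X * Z) -> `|D| <= nn * (del * Z) ->
  C = (2 * nn * X + nn) * M2 + 2 * (nn * (X * Z)) * (nn * Z) ->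
  del * (C + 1) <= 1 - lam ^+ 2 ->
  Q1 <= lam ^+ 2 ->
  Q1 + 2 * P * A + S * A - 2 * B * D - D ^+ 2 <= 1.
Proof.
move=> A0 AM n0 X0 Z0 d0 d1 hP hS hB hD hC hdel hQ.
have M0 : 0 <= M2 by apply: le_trans AM.
have f1 : P * A <= nn * (X * del) * M2.
  apply: le_trans (_ : `|P| * A <= _); first by rewrite ler_wpM2r // ler_norm.
  by apply: ler_pM => //.
have f2 : S * A <= nn * (del * del) * M2.
  apply: le_trans (_ : `|S| * A <= _); first by rewrite ler_wpM2r // ler_norm.
  by apply: ler_pM => //.
have f3 : - (B * D) <= nn * (X * Z) * (nn * (del * Z)).
  apply: le_trans (_ : `|B| * `|D| <= _); first by rewrite -normrM -normrN ler_norm.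
  by apply: ler_pM => //.
have f4 : nn * (del * del) * M2 <= nn * del * M2.
  have dd : del * del <= del by rewrite -[X in _ <= X](mulr1 del) ler_wpM2l.
  by rewrite -mulrA -[X in _ <= X]mulrA ler_wpM2l // ler_wpM2r.
have f5 : 0 <= D ^+ 2 := sqr_ge0 D.
have f6 : del * C = 2 * (nn * (X * del) * M2) + nn * del * M2 + 2 * (nn * (X * Z) * (nn * (del * Z))).
  by rewrite hC; ring.
nra.
Qed.

Lemma gap (n2 : (1 < n)%N) (K : set 'rV[R]_n) x0 : star_body K ->
  sine_polar (sine_polar K) x0 -> ~ K x0 ->
  exists al be : 'rV[R]_n, (forall i, al 0 i < be 0 i) /\
     box al be `<=` sine_polar (sine_polar K) `&` ~` K.
Proof.
move=> [rho [rpos [rc hK]]] hx0 nK.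
have n0 : (0 < n)%N by apply: ltn_trans n2.
pose j0 : 'I_n := Ordinal n0.
pose j1 : 'I_n := Ordinal n2.
pose e (j : 'I_n) : 'rV[R]_n := delta_mx 0 j.
have se : forall j, unit_sphere (e j) by move=> j; exact: sqnorm_e.
pose c := Num.min (rho (e j0)) (rho (e j1)).
have c0 : 0 < c by rewrite lt_min !rpos.
have Ke : forall j, (j = j0 \/ j = j1) -> K (c *: e j).
  move=> j hj; rewrite hK; exists c, (e j); split => //; split => //.
  by rewrite (ltW c0) /=; case: hj => ->; rewrite ge_min lexx ?orbT.
pose M2 := 2 / c ^+ 2.
have Lb : forall z, sine_polar K z -> sqnorm z <= M2.
  move=> z hz.
  have q : forall j, (j = j0 \/ j = j1) -> c ^+ 2 * (sqnorm z - z 0 j ^+ 2) <= 1.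
    move=> j hj; have := hz _ (Ke j hj); rewrite sinbr_le1 /Q sqnormZ dotvZr dot_e sqnorm_e.
    by move=> h; apply: le_trans h; rewrite le_eqVlt; apply/orP; left; apply/eqP; ring.
  have h0 := q j0 (or_introl erefl); have h1 := q j1 (or_intror erefl).
  have h2 := @two_sq_le z j0 j1 isT.
  have cc : 0 < c ^+ 2 by rewrite exprn_gt0.
  rewrite /M2 ler_pdivlMr //.
  nra.
have K0 : K 0.
  rewrite hK; exists 0, (e j0); split; first exact: se.
  by split; [rewrite lexx (ltW (rpos _ (se j0)))|rewrite scale0r].
have x0n0 : sqnorm x0 != 0.
  by apply/eqP => /sqnorm_eq0 h; apply: nK; rewrite h.
pose s := Num.sqrt (sqnorm x0).
have s0 : 0 < s by rewrite sqrtr_gt0 lt_def x0n0 sqnorm_ge0.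
pose u := s^-1 *: x0.
have hu : unit_sphere u.
  by rewrite /unit_sphere /= sqnormZ exprVn sqr_sqrtr ?sqnorm_ge0 // mulVf.
have x0u : x0 = s *: u by rewrite scalerA mulfV ?scale1r // gt_eqF.
have rus : rho u < s.
  rewrite ltNge; apply/negP => h; apply: nK; rewrite hK; exists s, u; split => //; split => //.
  by rewrite (ltW s0) h.
have r0 : 0 <= rho u := ltW (rpos u hu).
pose t := (rho u + s) / 2.
have rt : rho u < t by rewrite /t; lra.
have ts : t < s by rewrite /t; lra.
have t0 : 0 < t by rewrite /t; lra.
pose lam := t / s.
have lam0 : 0 <= lam by rewrite divr_ge0 // ltW.
have lam1 : lam < 1 by rewrite /lam ltr_pdivrMr // mul1r.
pose x1 := t *: u.
have x1lam : x1 = lam *: x0 by rewrite x0u scalerA /lam mulfVK // gt_eqF.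
pose X := 1 + sqnorm x1.
pose Z := 1 + M2.
pose nn : R := n%:R.
pose C := (2 * nn * X + nn) * M2 + 2 * (nn * (X * Z)) * (nn * Z).
have M0 : 0 <= M2 by rewrite /M2 divr_ge0 // ?sqr_ge0.
have X0 : 0 <= X by rewrite /X addr_ge0 // sqnorm_ge0.
have Z0 : 0 <= Z by rewrite /Z addr_ge0.
have nn0 : 0 <= nn by rewrite /nn ler0n.
have C0 : 0 <= C by rewrite /C; apply: addr_ge0; apply: mulr_ge0 => //; rewrite ?addr_ge0 ?mulr_ge0.
pose del := Num.min 1 ((1 - lam ^+ 2) / (C + 1)).
have lam2 : 0 < 1 - lam ^+ 2 by rewrite subr_gt0 expr_lt1.
have del0 : 0 < del by rewrite lt_min ltr01 divr_gt0 // ltr_wpDl.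
have del1 : del <= 1 by rewrite ge_min lexx.
have delC : del * (C + 1) <= 1 - lam ^+ 2.
  rewrite -ler_pdivlMr ?ltr_wpDl //; by rewrite ge_min lexx orbT.
have hA : forall d : 'rV[R]_n, (forall i, `|d 0 i| <= del) -> sine_polar (sine_polar K) (x1 + d).
  move=> d hd z hz; rewrite sinbr_le1.
  have hA := Lb z hz.
  have Zb : forall i, `|z 0 i| <= Z.
    by move=> i; apply: le_trans (coord_abs_le z i) _; rewrite lerD2l.
  have Xb : forall i, `|x1 0 i| <= X := coord_abs_le x1.
  have Q1 : Q x1 z <= lam ^+ 2.
    rewrite x1lam QZl; have := hx0 z hz; rewrite sinbr_le1 => h.
    by rewrite -[X in _ <= X]mulr1 ler_wpM2l // sqr_ge0.
  have -> : Q (x1 + d) z = Q x1 z + 2 * dotv x1 d * sqnorm z + sqnorm d * sqnorm z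
      - 2 * dotv x1 z * dotv d z - dotv d z ^+ 2.
    rewrite /Q sqnormD dotvDl; ring.
  apply: (@core lam _ M2 _ _ _ _ nn X Z del C) => //.
  - exact: sqnorm_ge0.
  - exact: ltW.
  - exact: dot_bound.
  - exact: dot_bound.
  - exact: dot_bound.
  - exact: dot_bound.
have hB := notK_near rc hu rt r0.
have [ee ee0 he] := near_box hB.
pose dl := Num.min del (ee / 2).
have dl0 : 0 < dl by rewrite lt_min del0 divr_gt0.
exists (x1 - const_mx dl), (x1 + const_mx dl); split.
  by move=> i; rewrite !mxE ltrBDr -addrA ltrDl addr_gt0.
move=> y hy.
have yd : y = x1 + (y - x1) by rewrite addrC subrK.
have hd : forall i, `|(y - x1) 0 i| <= dl.
  move=> i; have /andP [h1 h2] := hy i; move: h1 h2; rewrite !mxE => h1 h2.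
  rewrite ler_norml; apply/andP; split; lra.
split.
  rewrite yd; apply: hA => i; apply: le_trans (hd i) _; by rewrite ge_min lexx.
move=> Ky; apply: (he y).
  move=> i; have := hd i; rewrite !mxE distrC => h.
  have : dl <= ee / 2 by rewrite ge_min lexx orbT.
  change (t *: u) with x1; lra.
by move: Ky; rewrite hK.
Qed.

Lemma sub_ss (K : set 'rV[R]_n) : K `<=` sine_polar (sine_polar K).
Proof. by move=> y Ky x hx; rewrite sinbrC; apply: hx. Qed.

Lemma vol_fin (n0 : (0 < n)%N) (K : set 'rV[R]_n) : bounded_euclid K -> (volume K < +oo)%E.
Proof.
move=> [M hM].
pose c := 1 + M.
have sub : K `<=` box (const_mx (- c)) (const_mx c).
  move=> x Kx i; rewrite !mxE -ler_norml.
  by apply: le_trans (coord_abs_le x i) _; rewrite lerD2l hM.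
apply: le_lt_trans (volume_mono sub) _.
apply: le_lt_trans (volume_box_fin n0 _ _) _.
exact: ltry.
Qed.
End S.

Theorem lemma5p1 (R : realType) (n : nat) (hn : (2 <= n)%N) (K : set 'rV[R]_n) :
  bounded_euclid K -> lebesgue_measurable K ->
  (volume K <= volume (sine_polar (sine_polar K)))%E /\
  (star_body K ->
     (volume (sine_polar (sine_polar K)) = volume K <-> K = sine_polar (sine_polar K))).
Proof.
move=> hb hm.
have ss := @sub_ss R n K.
split; first exact: volume_mono.
move=> hs; split; last by move=> <-.
move=> E.
apply/seteqP; split => // x hx.
case: (pselect (K x)) => // nKx; exfalso.
have n0 : (0 < n)%N by apply: leq_trans hn.
have [al [be [ab hbox]]] := @gap R n hn K x hs hx nKx.
have fK := @vol_fin R n n0 K hb.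
have Kfin : volume K \is a fin_num by rewrite ge0_fin_numE // volume_ge0.
have hc := hm (sine_polar (sine_polar K)).
rewrite setIidr // in hc.
have pos : (0 < volume (sine_polar (sine_polar K) `&` ~` K))%E.
  apply: lt_le_trans (volume_mono hbox).
  apply: lt_le_trans (box_pos ab).
  rewrite lte_fin; apply: prodr_gt0 => i _; rewrite lt_max subr_gt0 ab //.
have := lteDl (volume (sine_polar (sine_polar K) `&` ~` K)) Kfin.
rewrite pos -hc E => h.
by move: h; rewrite ltxx.
Qed.
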